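(* Let $n,r\ge1$. Then, on $\mathbb{R}^n$: (i) $\mathcal{S}_r^-\Lambda^0=\mathcal{S}_r\Lambda^0$; (ii) $\mathcal{S}_r^-\Lambda^n=\mathcal{S}_{r-1}\Lambda^n$; (iii) for $0\le k\le n$, $\mathcal{S}_r^-\Lambda^k+d\,\mathcal{S}_{r+1}\Lambda^{k-1}=\mathcal{S}_r\Lambda^k$.
   Context: Fix $n\ge1$. For a multi-index $\alpha\in\mathbb{N}^n$ and a subset $\sigma=\{\sigma(1)<\dots<\sigma(k)\}\subset\{1,\dots,n\}$, the form monomial is $x^\alpha dx_\sigma:=x_1^{\alpha_1}\cdots x_n^{\alpha_n}\,dx_{\sigma(1)}\wedge\cdots\wedge dx_{\sigma(k)}$, of degree $|\alpha|$. $\mathcal{H}_r\Lambda^k(\mathbb{R}^n)$ is the span of form monomials with $|\alpha|=r$, $|\sigma|=k$ (it is $0$ if $r<0$ or $k\notin\{0,\dots,n\}$), and $\mathcal{P}_r\Lambda^k:=\bigoplus_{j=0}^r\mathcal{H}_j\Lambda^k$ ($=0$ if $r<0$). $d$ is the exterior derivative. The Koszul operator $\kappa$ is defined on monomials by $\kappa(x^\alpha dx_\sigma)=\sum_{i=1}^k(-1)^{i+1}x^\alpha x_{\sigma(i)}\,dx_{\sigma(1)}\wedge\cdots\wedge\widehat{dx_{\sigma(i)}}\wedge\cdots\wedge dx_{\sigma(k)}$ and extended linearly. The linear degree is $\mathrm{ldeg}(x^\alpha dx_\sigma):=\#\{i\notin\sigma:\alpha_i=1\}$, and $\mathcal{H}_{r,l}\Lambda^k$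 is the span of form monomials in $\mathcal{H}_r\Lambda^k$ with linear degree $\ge l$. Define $\mathcal{J}_r\Lambda^k:=\sum_{l\ge1}\kappa\,\mathcal{H}_{r+l-1,l}\Lambda^{k+1}$, the serendipity space $\mathcal{S}_r\Lambda^k:=\mathcal{P}_r\Lambda^k+\mathcal{J}_r\Lambda^k+d\,\mathcal{J}_{r+1}\Lambda^{k-1}$ (forms of degree $-1$ or $n+1$ are $0$), and for $r\ge1$ the trimmed serendipity space $\mathcal{S}_r^-\Lambda^k:=\mathcal{S}_{r-1}\Lambda^k+\kappa\,\mathcal{S}_{r-1}\Lambda^{k+1}$, all on $\mathbb{R}^n$. *)

(* Defs.v *)
(* Polynomial differential forms on R^n, following the paper:
   a form monomial x^alpha dx_sigma is a pair (alpha, sigma); a form is a finite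
   formal linear combination of monomials; d and kappa are defined on monomials
   and extended linearly; subspaces are predicates on coefficient functions. *)
From HB Require Import structures.
From mathcomp Require Import all_boot all_order all_algebra.
Set Implicit Arguments. Unset Strict Implicit. Unset Printing Implicit Defensive.
Import Order.TTheory GRing.Theory Num.Theory.
Local Open Scope ring_scope.

Section Forms.
Variable R : realFieldType.
Variable n : nat.

Definition mono := ({ffun 'I_n -> nat} * {set 'I_n})%type.
Definition lc := seq (R * mono).
Definition coef (f : lc) (m : mono) : R := \sum_(t <- f | t.2 == m) t.1.

Definition mdeg (m : mono) : nat := (\sum_(i < n) m.1 i)%N.
Definition fdeg (m : mono) : nat := #|m.2|.
Definition ldeg (m : mono) : nat := #|[set i | (i \notin m.2) && (m.1 i == 1%N)]|.

Definition sgn (j : 'I_n) (s : {set 'I_n}) : R := (-1) ^+ #|[set l in s | (l < j)%N]|.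
Definition incr (a : {ffun 'I_n -> nat}) (j : 'I_n) : {ffun 'I_n -> nat} :=
  [ffun i => (a i + (i == j))%N].
Definition decr (a : {ffun 'I_n -> nat}) (j : 'I_n) : {ffun 'I_n -> nat} :=
  [ffun i => (a i - (i == j))%N].

Definition dmono (m : mono) : lc :=
  [seq ((m.1 j)%:R * sgn j m.2, (decr m.1 j, j |: m.2)) | j <- enum 'I_n & j \notin m.2].
(* kappa (x^a dx_s) = sum_i (-1)^(i+1) x^a x_{s(i)} dx_{s \ s(i)} *)
Definition kmono (m : mono) : lc :=
  [seq (sgn j m.2, (incr m.1 j, m.2 :\ j)) | j <- enum 'I_n & j \in m.2].

Definition linext (L : mono -> lc) (f : lc) : lc :=
  flatten [seq [seq (t.1 * s.1, s.2) | s <- L t.2] | t <- f].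
Definition dlc := linext dmono.
Definition klc := linext kmono.

Definition space := (mono -> R) -> Prop.
Definition eqS (V W : space) := forall g, V g <-> W g.
Definition spanM (P : pred mono) : space :=
  fun g => exists f : lc, all (fun t => P t.2) f /\ coef f =1 g.
Definition img (L : lc -> lc) (V : space) : space :=
  fun g => exists f : lc, V (coef f) /\ coef (L f) =1 g.
Definition addS (V W : space) : space :=
  fun g => exists u v, V u /\ W v /\ forall m, g m = u m + v m.
Definition bigsumS (V : nat -> space) : space :=
  fun g => exists (L : nat) (v : nat -> mono -> R),
    (forall l, (0 < l < L)%N -> V l (v l)) /\
    forall m, g m = \sum_(1 <= l < L) v l m.

Definition Hs (r k : int) : space :=
  spanM (fun m => ((mdeg m)%:Z == r) && ((fdeg m)%:Z == k)).
Definition Ps (r k : int) : space :=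
  spanM (fun m => ((mdeg m)%:Z <= r) && ((fdeg m)%:Z == k)).
Definition Hrl (r : int) (l : nat) (k : int) : space :=
  spanM (fun m => [&& (mdeg m)%:Z == r, (fdeg m)%:Z == k & (l <= ldeg m)%N]).
Definition Js (r k : int) : space :=
  bigsumS (fun l => img klc (Hrl (r + l%:Z - 1) l (k + 1))).
Definition Ss (r k : int) : space :=
  addS (addS (Ps r k) (Js r k)) (img dlc (Js (r + 1) (k - 1))).
Definition Sms (r k : int) : space :=
  addS (Ss (r - 1) k) (img klc (Ss (r - 1) (k + 1))).

End Forms.

(* Main.v *)
Require Import Defs.
From HB Require Import structures.
From mathcomp Require Import all_boot all_order all_algebra.
From mathcomp Require Import zify ring lra.
Import Order.TTheory GRing.Theory Num.Theory.
Local Open Scope ring_scope.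
Set Implicit Arguments. Unset Strict Implicit. Unset Printing Implicit Defensive.

Section Work.
Variable R : realFieldType.
Variable n : nat.
Local Notation mono := (mono n).
Local Notation lc := (lc R n).
Local Notation space := (Defs.space R n).
Implicit Types (f : lc) (m : mono).

Definition sc (c : R) (f : lc) : lc := [seq (c * t.1, t.2) | t <- f].

Lemma coefE f m : coef f m = \sum_(t <- f) t.1 * (t.2 == m)%:R.
Proof.
rewrite /coef big_mkcond /=; apply: eq_bigr => t _.
by case: eqP => _; rewrite ?mulr1 ?mulr0.
Qed.

Lemma coef_nil m : coef ([::] : lc) m = 0.
Proof. by rewrite /coef big_nil. Qed.

Lemma coef_cat f1 f2 m : coef (f1 ++ f2) m = coef f1 m + coef f2 m.
Proof. by rewrite /coef big_cat. Qed.

Lemma coef_cons t f m : coef (t :: f) m = t.1 * coef [:: (1, t.2)] m + coef f m.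
Proof. by rewrite !coefE !big_cons big_nil /= mul1r addr0. Qed.

Lemma coef_sc c f m : coef (sc c f) m = c * coef f m.
Proof.
rewrite !coefE big_map mulr_sumr; apply: eq_bigr => t _ /=; by rewrite mulrA.
Qed.

Lemma sum_linext (M : mono -> lc) f (phi : mono -> R) :
  \sum_(s <- linext M f) s.1 * phi s.2 = \sum_(t <- f) t.1 * \sum_(u <- M t.2) u.1 * phi u.2.
Proof.
rewrite /linext big_flatten big_map; apply: eq_bigr => t _.
rewrite big_map mulr_sumr; apply: eq_bigr => u _ /=; by rewrite mulrA.
Qed.

Lemma coef_linext (M : mono -> lc) f m :
  coef (linext M f) m = \sum_(t <- f) t.1 * coef (M t.2) m.
Proof. rewrite coefE (sum_linext M f (fun x => (x == m)%:R)); apply: eq_bigr => t _; by rewrite coefE. Qed.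

Lemma sum_delta (s : seq mono) x (G : mono -> R) :
  uniq s -> x \in s -> \sum_(u <- s) (x == u)%:R * G u = G x.
Proof.
elim: s => [|y s IH] //= /andP [ys us]; rewrite in_cons big_cons.
case: (eqVneq x y) => [-> _|nxy /= xs].
  rewrite mul1r big1_seq ?addr0 // => u /andP [_ us'].
  case: eqVneq => [eu|_]; last by rewrite mul0r.
  by move: ys; rewrite eu us'.
by rewrite mul0r add0r IH.
Qed.

Lemma sum_coef f (phi : mono -> R) (s : seq mono) :
  uniq s -> {subset map snd f <= s} ->
  \sum_(t <- f) t.1 * phi t.2 = \sum_(u <- s) coef f u * phi u.
Proof.
move=> us sub.
under [RHS]eq_bigr => u _ do rewrite coefE mulr_suml.
rewrite exchange_big /=; apply: eq_big_seq => t tf.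
under eq_bigr => u _ do rewrite -mulrA.
rewrite -mulr_sumr; congr (_ * _).
rewrite sum_delta //; apply: sub; apply: map_f => //.
Qed.

Lemma linext_wd (M : mono -> lc) f1 f2 :
  coef f1 =1 coef f2 -> coef (linext M f1) =1 coef (linext M f2).
Proof.
move=> e m; rewrite !coefE (sum_linext M f1 (fun x => (x == m)%:R)) (sum_linext M f2 (fun x => (x == m)%:R)).
set s := undup (map snd (f1 ++ f2)).
have us : uniq s by apply: undup_uniq.
set phi := (fun x => \sum_(u <- M x) u.1 * (u.2 == m)%:R).
rewrite (@sum_coef f1 phi s) ?(@sum_coef f2 phi s) //.
- by apply: eq_bigr => u _; rewrite e.
- by move=> x xf; rewrite mem_undup map_cat mem_cat xf orbT.
- by move=> x xf; rewrite mem_undup map_cat mem_cat xf.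
Qed.

Definition lin (L : lc -> lc) :=
  [/\ forall f1 f2, coef f1 =1 coef f2 -> coef (L f1) =1 coef (L f2),
      forall f1 f2 m, coef (L (f1 ++ f2)) m = coef (L f1) m + coef (L f2) m,
      forall c f m, coef (L (sc c f)) m = c * coef (L f) m
    & forall m, coef (L [::]) m = 0].

Lemma lin_linext (M : mono -> lc) : lin (linext M).
Proof.
split.
- exact: linext_wd.
- by move=> f1 f2 m; rewrite !coef_linext big_cat.
- by move=> c f m; rewrite !coef_linext big_map mulr_sumr; apply: eq_bigr => t _ /=; rewrite mulrA.
- by move=> m; rewrite coef_linext big_nil.
Qed.

Lemma lin_comp L1 L2 : lin L1 -> lin L2 -> lin (fun f => L1 (L2 f)).
Proof.
case=> w1 c1 s1 n1 [w2 c2 s2 n2]; split.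
- by move=> f1 f2 e; apply: w1; apply: w2.
- move=> f1 f2 m; rewrite -c1; apply: w1 => x; by rewrite c2 coef_cat.
- move=> c f m; rewrite -s1; apply: w1 => x; by rewrite s2 coef_sc.
- move=> m; rewrite -(n1 m); apply: w1 => x; by rewrite n2 coef_nil.
Qed.


Definition sub (V W : space) := forall g, V g -> W g.
Definition good (V : space) :=
  [/\ forall g1 g2, g1 =1 g2 -> V g1 -> V g2,
      V (fun _ => 0),
      forall g1 g2, V g1 -> V g2 -> V (fun m => g1 m + g2 m),
      forall c g, V g -> V (fun m => c * g m)
    & forall g, V g -> exists f, coef f =1 g].
Definition maps (L : lc -> lc) (V W : space) := forall f, V (coef f) -> W (coef (L f)).
Definition Z : space := fun g => g =1 (fun _ => 0).

Lemma good_span (P : pred mono) : good (spanM P).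
Proof.
split.
- move=> g1 g2 e [f [Pf ef]]; exists f; split=> // m; by rewrite ef e.
- exists [::]; split=> // m; exact: coef_nil.
- move=> g1 g2 [f1 [P1 e1]] [f2 [P2 e2]]; exists (f1 ++ f2); split.
    by rewrite all_cat P1 P2.
  by move=> m; rewrite coef_cat e1 e2.
- move=> c g [f [Pf ef]]; exists (sc c f); split.
    by rewrite all_map; exact: Pf.
  by move=> m; rewrite coef_sc ef.
- by move=> g [f [_ ef]]; exists f.
Qed.

Lemma good_img L V : lin L -> good V -> good (img L V).
Proof.
case=> lw lc ls ln [Ve V0 Va Vs Vr]; split.
- move=> g1 g2 e [f [Vf ef]]; exists f; split=> // m; by rewrite ef e.
- exists [::]; split=> //; apply: (Ve _ _ _ V0) => m; by rewrite coef_nil.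
- move=> g1 g2 [f1 [V1 e1]] [f2 [V2 e2]]; exists (f1 ++ f2); split.
    apply: (Ve _ _ _ (Va _ _ V1 V2)) => m; by rewrite coef_cat.
  by move=> m; rewrite lc e1 e2.
- move=> c g [f [Vf ef]]; exists (sc c f); split.
    apply: (Ve _ _ _ (Vs c _ Vf)) => m; by rewrite coef_sc.
  by move=> m; rewrite ls ef.
- by move=> g [f [_ ef]]; exists (L f).
Qed.

Lemma good_addS V W : good V -> good W -> good (addS V W).
Proof.
case=> Ve V0 Va Vs Vr [We W0 Wa Ws Wr]; split.
- move=> g1 g2 e [u [v [Vu [Wv euv]]]]; exists u, v; split=> //; split=> // m; by rewrite -e.
- exists (fun _ => 0), (fun _ => 0); split=> //; split=> // m; by rewrite addr0.
- move=> g1 g2 [u1 [v1 [Vu1 [Wv1 e1]]]] [u2 [v2 [Vu2 [Wv2 e2]]]].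
  exists (fun m => u1 m + u2 m), (fun m => v1 m + v2 m); split; [exact: Va|split; [exact: Wa|]].
  move=> m; rewrite e1 e2; ring.
- move=> c g [u [v [Vu [Wv e]]]]; exists (fun m => c * u m), (fun m => c * v m).
  split; [exact: Vs|split; [exact: Ws|]]; move=> m; by rewrite e mulrDr.
- move=> g [u [v [Vu [Wv e]]]]; case: (Vr _ Vu) => f1 e1; case: (Wr _ Wv) => f2 e2.
  exists (f1 ++ f2) => m; by rewrite coef_cat e1 e2 e.
Qed.

Lemma sum_trunc (F : nat -> R) N1 N : (N1 <= N)%N ->
  \sum_(1 <= l < N) (if (l < N1)%N then F l else 0) = \sum_(1 <= l < N1) F l.
Proof.
case: N1 => [|N1] hN.
  by rewrite [RHS]big_geq //; apply: big1.
rewrite (@big_cat_nat _ _ _ N1.+1) //=.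
rewrite [X in _ + X]big_nat_cond [X in _ + X]big1 ?addr0.
  by apply: eq_big_nat => l /andP [_ ->].
by move=> l /andP [/andP [hl _] _]; rewrite ltnNge hl.
Qed.

Lemma good_bigsum (V : nat -> space) : (forall l, good (V l)) -> good (bigsumS V).
Proof.
move=> gV; split.
- move=> g1 g2 e [N [v [Vv ev]]]; exists N, v; split=> // m; by rewrite -e.
- exists 0%N, (fun _ _ => 0); split; first by move=> l /andP [_ h]; rewrite ltn0 in h.
  by move=> m; rewrite big_geq.
- move=> g1 g2 [N1 [v1 [Vv1 e1]]] [N2 [v2 [Vv2 e2]]].
  exists (maxn N1 N2), (fun l m => (if (l < N1)%N then v1 l m else 0) + (if (l < N2)%N then v2 l m else 0)).
  split.
    move=> l /andP [l0 _]; case: (gV l) => Ve V0 Va _ _; apply: Va.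
      case h: (l < N1)%N; last exact: V0.
      by apply: (Ve (v1 l)); [move=> m|apply: Vv1; rewrite l0 h].
    case h: (l < N2)%N; last exact: V0.
    by apply: (Ve (v2 l)); [move=> m|apply: Vv2; rewrite l0 h].
  move=> m; rewrite big_split /= e1 e2.
  rewrite (sum_trunc (fun l => v1 l m)) ?leq_maxl //.
  by rewrite (sum_trunc (fun l => v2 l m)) ?leq_maxr.
- move=> c g [N [v [Vv e]]]; exists N, (fun l m => c * v l m); split.
    move=> l hl; case: (gV l) => _ _ _ Vs _; exact: (Vs c _ (Vv l hl)).
  by move=> m; rewrite e mulr_sumr.
- move=> g [N [v [Vv e]]].
  suff: forall N', (N' <= N)%N -> exists f, coef f =1 (fun m => \sum_(1 <= l < N') v l m).
    by case/(_ N (leqnn N)) => f ef; exists f => m; rewrite ef e.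
  elim=> [|N' IH] hN'.
    by exists [::] => m; rewrite coef_nil big_geq.
  case: (IH (ltnW hN')) => f ef.
  case: N' IH hN' ef => [|N'] IH hN' ef.
    by exists [::] => m; rewrite coef_nil big_geq.
  have : V N'.+1 (v N'.+1) by apply: Vv; rewrite hN'.
  case: (gV N'.+1) => _ _ _ _ Vr; case/Vr => f1 e1.
  exists (f ++ f1) => m; by rewrite coef_cat ef e1 [RHS]big_nat_recr.
Qed.

Lemma good_Z : good Z.
Proof.
split.
- by move=> g1 g2 e h m; rewrite -e h.
- by [].
- by move=> g1 g2 h1 h2 m; rewrite h1 h2 addr0.
- by move=> c g h m; rewrite h mulr0.
- by move=> g h; exists [::] => m; rewrite coef_nil h.
Qed.

Lemma good_sum_lc W f : good W -> (forall t, t \in f -> W (coef [:: (1, t.2)])) -> W (coef f).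
Proof.
case=> We W0 Wa Ws _; elim: f => [|t f IH] h.
  by apply: (We _ _ _ W0) => m; rewrite coef_nil.
apply: (We _ _ _ (Wa _ _ (Ws t.1 _ (h t (mem_head _ _))) (IH _))).
  by move=> m; rewrite coef_cons.
by move=> u uf; apply: h; rewrite in_cons uf orbT.
Qed.

Lemma sub_span (P : pred mono) W : good W -> (forall m, P m -> W (coef [:: (1, m)])) -> sub (spanM P) W.
Proof.
move=> gW h g [f [Pf ef]]; case: (gW) => We _ _ _ _; apply: (We _ _ ef).
apply: good_sum_lc => // t tf; apply: h; exact: (allP Pf).
Qed.

Lemma maps_span L (P : pred mono) W : lin L -> good W ->
  (forall m, P m -> W (coef (L [:: (1, m)]))) -> maps L (spanM P) W.
Proof.
case=> lw lc ls ln gW h f [f' [Pf ef]]; case: (gW) => We W0 Wa Ws _.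
apply: (We _ _ (lw _ _ ef)).
elim: f' Pf {ef} => [|[a x] f' IH] /= Pf.
  by apply: (We _ _ _ W0) => m; rewrite ln.
case/andP: Pf => Px Pf.
have -> : (a, x) :: f' = sc a [:: (1, x)] ++ f' by rewrite /sc /= mulr1.
apply: (We _ _ _ (Wa _ _ (Ws a _ (h x Px)) (IH Pf))) => m.
by rewrite lc ls.
Qed.

Lemma sub_img L V W : good W -> maps L V W -> sub (img L V) W.
Proof. case=> We _ _ _ _ h g [f [Vf ef]]; exact: (We _ _ ef (h f Vf)). Qed.

Lemma maps_sub L V V' W : sub V V' -> maps L V' W -> maps L V W.
Proof. by move=> s h f Vf; apply: h; apply: s. Qed.

Lemma maps_addS L V1 V2 W : lin L -> good V1 -> good V2 -> good W ->
  maps L V1 W -> maps L V2 W -> maps L (addS V1 V2) W.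
Proof.
case=> lw lc _ _ [V1e _ _ _ V1r] [V2e _ _ _ V2r] [We _ Wa _ _] h1 h2 f [u [v [Vu [Vv e]]]].
case: (V1r _ Vu) => f1 e1; case: (V2r _ Vv) => f2 e2.
have ef : coef (f1 ++ f2) =1 coef f by move=> m; rewrite coef_cat e1 e2 e.
apply: (We _ _ (lw _ _ ef)).
apply: (We _ _ _ (Wa _ _ (h1 f1 (V1e _ _ (fun m => esym (e1 m)) Vu)) (h2 f2 (V2e _ _ (fun m => esym (e2 m)) Vv)))).
by move=> m; rewrite lc.
Qed.

Lemma maps_bigsum L (V : nat -> space) W : lin L -> (forall l, good (V l)) -> good W ->
  (forall l, (0 < l)%N -> maps L (V l) W) -> maps L (bigsumS V) W.
Proof.
case=> lw lc _ ln gV [We W0 Wa _ _] h f [N [v [Vv e]]].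
suff: forall N', (N' <= N)%N -> exists f', coef f' =1 (fun m => \sum_(1 <= l < N') v l m) /\ W (coef (L f')).
  case/(_ N (leqnn N)) => f' [ef' Wf']; apply: (We _ _ (lw f' f _) Wf').
  by move=> m; rewrite ef' e.
elim=> [|N' IH] hN'.
  exists [::]; split; first by move=> m; rewrite coef_nil big_geq.
  by apply: (We _ _ _ W0) => m; rewrite ln.
case: N' IH hN' => [|N'] IH hN'.
  exists [::]; split; first by move=> m; rewrite coef_nil big_geq.
  by apply: (We _ _ _ W0) => m; rewrite ln.
case: (IH (ltnW hN')) => f' [ef' Wf'].
have VN : V N'.+1 (v N'.+1) by apply: Vv; rewrite hN'.
case: (gV N'.+1) => VNe _ _ _ VNr; case: (VNr _ VN) => f1 e1.
exists (f' ++ f1); split.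
  by move=> m; rewrite coef_cat ef' e1 [RHS]big_nat_recr.
apply: (We _ _ _ (Wa _ _ Wf' (h N'.+1 isT f1 (VNe _ _ (fun m => esym (e1 m)) VN)))).
by move=> m; rewrite lc.
Qed.

Lemma maps_img L1 L2 V W : lin L2 -> good W ->
  maps (fun f => L2 (L1 f)) V W -> maps L2 (img L1 V) W.
Proof.
case=> lw _ _ _ [We _ _ _ _] h f [f0 [Vf0 ef0]].
exact: (We _ _ (lw _ _ ef0) (h f0 Vf0)).
Qed.

Lemma maps_Z L W : lin L -> good W -> maps L Z W.
Proof.
case=> lw _ _ ln [We W0 _ _ _] f hf; apply: (We _ _ _ W0) => m.
by rewrite -(ln m); apply: lw => x; rewrite hf coef_nil.
Qed.

Lemma sub_addS V1 V2 W : good W -> sub V1 W -> sub V2 W -> sub (addS V1 V2) W.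
Proof.
case=> We _ Wa _ _ h1 h2 g [u [v [Vu [Vv e]]]].
by apply: (We _ _ _ (Wa _ _ (h1 _ Vu) (h2 _ Vv))) => m; rewrite e.
Qed.

Lemma sub_addl V1 V2 W : good V2 -> sub W V1 -> sub W (addS V1 V2).
Proof.
case=> _ V0 _ _ _ h g Wg; exists g, (fun _ => 0); split; first exact: h.
by split=> // m; rewrite addr0.
Qed.

Lemma sub_addr V1 V2 W : good V1 -> sub W V2 -> sub W (addS V1 V2).
Proof.
case=> _ V0 _ _ _ h g Wg; exists (fun _ => 0), g; split=> //.
by split; [exact: h|move=> m; rewrite add0r].
Qed.

Lemma sub_bigsum (V : nat -> space) W : good W -> (forall l, (0 < l)%N -> sub (V l) W) -> sub (bigsumS V) W.
Proof.
case=> We W0 Wa _ _ h g [N [v [Vv e]]].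
suff: forall N', (N' <= N)%N -> W (fun m => \sum_(1 <= l < N') v l m).
  move/(_ N (leqnn N)) => H; by apply: (We _ _ _ H) => m; rewrite e.
elim=> [|N' IH] hN'.
  by apply: (We _ _ _ W0) => m; rewrite big_geq.
case: N' IH hN' => [|N'] IH hN'.
  by apply: (We _ _ _ W0) => m; rewrite big_geq.
apply: (We _ _ _ (Wa _ _ (IH (ltnW hN')) (h N'.+1 isT _ (Vv N'.+1 _)))).
  by move=> m; rewrite [RHS]big_nat_recr.
by rewrite hN'.
Qed.

Lemma sub_bigsum1 (V : nat -> space) l W : (forall l, good (V l)) -> (0 < l)%N ->
  sub W (V l) -> sub W (bigsumS V).
Proof.
move=> gV l0 h g Wg; exists l.+1, (fun j m => if j == l then g m else 0); split.
  move=> j /andP [j0 _]; case: eqP => [->|_]; first exact: h.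
  by case: (gV j).
move=> m; rewrite big_nat_recr //= eqxx big_nat_cond big1 ?add0r //.
by move=> j /andP [/andP [_ hj] _]; rewrite (ltn_eqF hj).
Qed.

Lemma sub_img_mono L V W : sub V W -> sub (img L V) (img L W).
Proof. by move=> s g [f [Vf ef]]; exists f; split=> //; apply: s. Qed.

Lemma sub_trans U V W : sub U V -> sub V W -> sub U W.
Proof. by move=> h1 h2 g /h1 /h2. Qed.

Lemma addS_Z V X : good V -> good X -> sub X Z -> eqS (addS V X) V.
Proof.
case=> Ve _ _ _ _ [_ X0 _ _ _] hX g; split.
  case=> u [v [Vu [Xv e]]]; apply: (Ve _ _ _ Vu) => m; by rewrite e (hX _ Xv m) addr0.
move=> Vg; exists g, (fun _ => 0); split=> //; split=> // m; by rewrite addr0.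
Qed.

End Work.

Section Comp.
Variable R : realFieldType.
Variable n : nat.
Local Notation mono := (mono n).
Local Notation lc := (lc R n).
Local Notation sgn := (@Defs.sgn R n).
Local Notation dm := (@dmono R n).
Local Notation km := (@kmono R n).
Local Notation dl := (@dlc R n).
Local Notation kl := (@klc R n).
Local Notation Z := (@Z R n).
Implicit Types (f : lc) (m : mono).

Lemma sum_mapfilt (P : pred 'I_n) (c : 'I_n -> R) (M : 'I_n -> mono) (G : R * mono -> R) :
  \sum_(t <- [seq (c j, M j) | j <- enum 'I_n & P j]) G t = \sum_(j | P j) G (c j, M j).
Proof. by rewrite big_map big_filter big_enum_cond /=. Qed.

Lemma coef_mapfilt (P : pred 'I_n) (c : 'I_n -> R) (M : 'I_n -> mono) m' :
  coef [seq (c j, M j) | j <- enum 'I_n & P j] m' = \sum_(j | P j) c j * (M j == m')%:R.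
Proof. by rewrite coefE sum_mapfilt. Qed.

Lemma sgn_sq j (s : {set 'I_n}) : sgn j s * sgn j s = 1.
Proof. by rewrite /Defs.sgn -exprMn mulrNN mulr1 expr1n. Qed.

Lemma sgnU i j (s : {set 'I_n}) : j \notin s -> sgn i (j |: s) = (if (j < i)%N then -1 else 1) * sgn i s.
Proof.
move=> js; rewrite /Defs.sgn.
case: ifP => ji.
  have -> : [set l in j |: s | (l < i)%N] = j |: [set l in s | (l < i)%N] :> {set 'I_n}.
    apply/setP => l; rewrite !inE; case: eqP => [->|] //=; by rewrite ji.
  by rewrite cardsU1 inE (negbTE js) /= add1n exprS.
rewrite mul1r; congr (_ ^+ _); apply: eq_card => l; rewrite !inE.
case: eqP => [->|] //=; by rewrite ji (negbTE js).
Qed.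

Lemma sgnD i j (s : {set 'I_n}) : i \in s -> sgn j s = (if (i < j)%N then -1 else 1) * sgn j (s :\ i).
Proof. move=> hi; by rewrite -{1}(setD1K hi) sgnU // setD11. Qed.

Lemma incr_decr (a : {ffun 'I_n -> nat}) i j : i != j -> incr (decr a j) i = decr (incr a i) j.
Proof.
move=> ij; apply/ffunP => x; rewrite !ffunE.
case: (eqVneq x i) => [xi|xi]; case: (eqVneq x j) => [xj|xj] //=; try lia.
by move: ij; rewrite -xi xj eqxx.
Qed.

Lemma incr_decrK (a : {ffun 'I_n -> nat}) j : (0 < a j)%N -> incr (decr a j) j = a.
Proof.
move=> h; apply/ffunP => x; rewrite !ffunE; case: eqVneq => [->|] /=; lia.
Qed.

Lemma decr_incrK (a : {ffun 'I_n -> nat}) j : decr (incr a j) j = a.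
Proof. apply/ffunP => x; rewrite !ffunE; case: eqVneq => /=; lia. Qed.

Lemma incr_ne (a : {ffun 'I_n -> nat}) i j : j != i -> incr a i j = a j.
Proof. by move=> ji; rewrite ffunE (negbTE ji) addn0. Qed.

Lemma decr_ne (a : {ffun 'I_n -> nat}) i j : j != i -> decr a i j = a j.
Proof. by move=> ji; rewrite ffunE (negbTE ji) subn0. Qed.

Lemma setUD1 (s : {set 'I_n}) i j : i != j -> (j |: s) :\ i = j |: (s :\ i).
Proof.
move=> ij; apply/setP => x; rewrite !inE.
case: (eqVneq x j) => [->|] /=; first by rewrite eq_sym ij.
by [].
Qed.


Lemma sum_dm (G : R * mono -> R) m :
  \sum_(t <- dm m) G t = \sum_(j | j \notin m.2) G ((m.1 j)%:R * sgn j m.2, (decr m.1 j, j |: m.2)).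
Proof. by rewrite /dmono sum_mapfilt. Qed.

Lemma sum_km (G : R * mono -> R) m :
  \sum_(t <- km m) G t = \sum_(j | j \in m.2) G (sgn j m.2, (incr m.1 j, m.2 :\ j)).
Proof. by rewrite /kmono sum_mapfilt. Qed.

Lemma coef_dm m m' : coef (dm m) m' =
  \sum_(j | j \notin m.2) ((m.1 j)%:R * sgn j m.2) * (((decr m.1 j, j |: m.2) : mono) == m')%:R.
Proof. by rewrite coefE (sum_dm (fun t => t.1 * (t.2 == m')%:R)). Qed.

Lemma coef_km m m' : coef (km m) m' =
  \sum_(j | j \in m.2) sgn j m.2 * (((incr m.1 j, m.2 :\ j) : mono) == m')%:R.
Proof. by rewrite coefE (sum_km (fun t => t.1 * (t.2 == m')%:R)). Qed.

Lemma hom1 (a : {ffun 'I_n -> nat}) (s : {set 'I_n}) m' :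
  coef (kl (dm (a, s))) m' + coef (dl (km (a, s))) m' =
  ((\sum_(i < n) a i) + #|s|)%:R * (((a, s) : mono) == m')%:R.
Proof.
rewrite /klc /dlc !coef_linext (sum_dm (fun t => t.1 * coef (km t.2) m'))
  (sum_km (fun t => t.1 * coef (dm t.2) m')) /=.
under eq_bigr => j _ do rewrite coef_km /=.
under [X in _ + X]eq_bigr => i _ do rewrite coef_dm /=.
set E := (((a, s) : mono) == m')%:R.
set A := fun j i => (a j)%:R * sgn j s * (sgn i (j |: s) *
   (((incr (decr a j) i, (j |: s) :\ i) : mono) == m')%:R).
set B := fun i j => sgn i s * ((incr a i j)%:R * sgn j (s :\ i) *
   (((decr (incr a i) j, j |: (s :\ i)) : mono) == m')%:R).
rewrite (eq_bigr (fun j => (a j)%:R * E + \sum_(i | i \in s) A j i)); last first.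
  move=> j js; rewrite (bigD1 j) ?setU11 //= setU1K // sgnU // ltnn mul1r.
  rewrite (eq_bigl (fun i => i \in s)); last first.
    move=> i; rewrite in_setU1; case: eqVneq => [->|] /=; last by rewrite andbT.
    by apply/esym/negbTE.
  rewrite mulrDr mulr_sumr; congr (_ + _).
  rewrite /E mulrA -[_ * sgn j s * sgn j s]mulrA sgn_sq mulr1.
  case: (posnP (a j)) => [->|aj]; first by rewrite !mul0r.
  by rewrite incr_decrK.
rewrite [X in _ + X](eq_bigr (fun i => (a i + 1)%:R * E + \sum_(j | j \notin s) B i j)); last first.
  move=> i hi; rewrite (bigD1 i) ?setD11 //=.
  rewrite (eq_bigl (fun j => j \notin s)); last first.
    move=> j; rewrite in_setD1; case: eqVneq => [->|] /=; last by rewrite andbT.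
    by apply/esym/negbF.
  rewrite mulrDr mulr_sumr; congr (_ + _).
  rewrite decr_incrK setD1K // ffunE eqxx [sgn i s](@sgnD i i s hi) ltnn mul1r.
  change (a i + true)%N with (a i + 1)%N.
  transitivity ((a i + 1)%:R * (sgn i (s :\ i) * sgn i (s :\ i)) * E); first by rewrite /E; ring.
  by rewrite sgn_sq mulr1.
rewrite !big_split /=.
have X : \sum_(j | j \notin s) \sum_(i | i \in s) A j i + \sum_(i | i \in s) \sum_(j | j \notin s) B i j = 0.
  rewrite [X in _ + X]exchange_big -big_split /=; apply: big1 => j js.
  rewrite -big_split /=; apply: big1 => i hi.
  have ij : i != j by apply/eqP => e; move: js; rewrite -e hi.
  have ji : j != i by rewrite eq_sym.
  rewrite /A /B (@incr_ne a i j ji) -incr_decr // -setUD1 // sgnU // (@sgnD i j s hi).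
  case: ltngtP => h; try ring.
  by move: ij; rewrite (val_inj h) eqxx.
rewrite addrACA X addr0 -!mulr_suml -mulrDl; congr (_ * _).
rewrite -!natr_sum -natrD; congr (_%:R).
rewrite big_split /= sum1_card [in RHS](bigID (fun i => i \in s)) /=.
by rewrite addnA; congr (_ + _)%N; apply: addnC.
Qed.


Lemma setDDC (s : {set 'I_n}) i j : (s :\ i) :\ j = (s :\ j) :\ i.
Proof. apply/setP => x; rewrite !inE; by case: (x != i); case: (x != j). Qed.

Lemma incrC (a : {ffun 'I_n -> nat}) i j : incr (incr a i) j = incr (incr a j) i.
Proof. apply/ffunP => x; rewrite !ffunE; lia. Qed.

Lemma decrC (a : {ffun 'I_n -> nat}) i j : decr (decr a i) j = decr (decr a j) i.
Proof. apply/ffunP => x; rewrite !ffunE; lia. Qed.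

Lemma antisym0 (G : 'I_n -> 'I_n -> R) : (forall i j, G i j = - G j i) ->
  \sum_i \sum_j G i j = 0.
Proof.
move=> h; set S := \sum_i \sum_j G i j.
have : S = - S.
  rewrite {1}/S exchange_big /= /S -sumrN; apply: eq_bigr => j _.
  rewrite -sumrN; apply: eq_bigr => i _; exact: h.
move=> e; lra.
Qed.

Lemma kk1 (a : {ffun 'I_n -> nat}) (s : {set 'I_n}) m' : coef (kl (km (a, s))) m' = 0.
Proof.
rewrite /klc coef_linext (sum_km (fun t => t.1 * coef (km t.2) m')) /=.
set G := fun i j => if [&& i \in s, j \in s & j != i] then
   sgn i s * sgn j (s :\ i) * (((incr (incr a i) j, (s :\ i) :\ j) : mono) == m')%:R else 0.
transitivity (\sum_i \sum_j G i j); last first.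
  apply: antisym0 => i j; rewrite /G.
  case: (boolP (i \in s)) => hi; case: (boolP (j \in s)) => hj /=; rewrite ?oppr0 //.
  rewrite eq_sym; case: eqVneq => [_|ij]; rewrite ?oppr0 //=.
  rewrite incrC setDDC (@sgnD j i s hj) (@sgnD i j s hi).
  case: ltngtP => h; try ring.
  by move: ij; rewrite (val_inj h) eqxx.
rewrite big_mkcond; apply: eq_bigr => i _; rewrite coef_km /=.
case: (boolP (i \in s)) => hi; last by rewrite big1 // => j _; rewrite /G (negbTE hi).
rewrite mulr_sumr big_mkcond; apply: eq_bigr => j _; rewrite /G hi in_setD1 /=.
case: (j \in s); rewrite ?andbF ?andbT //=; case: (j != i) => //; by rewrite mulrA.
Qed.

Lemma dd1 (a : {ffun 'I_n -> nat}) (s : {set 'I_n}) m' : coef (dl (dm (a, s))) m' = 0.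
Proof.
rewrite /dlc coef_linext (sum_dm (fun t => t.1 * coef (dm t.2) m')) /=.
set G := fun j i => if [&& j \notin s, i \notin s & i != j] then
   ((a j)%:R * sgn j s) * ((a i)%:R * sgn i (j |: s) *
   (((decr (decr a j) i, i |: (j |: s)) : mono) == m')%:R) else 0.
transitivity (\sum_j \sum_i G j i); last first.
  apply: antisym0 => j i; rewrite /G.
  case: (boolP (j \in s)) => hj; case: (boolP (i \in s)) => hi /=; rewrite ?oppr0 //.
  rewrite eq_sym; case: eqVneq => [_|ij]; rewrite ?oppr0 //=.
  rewrite decrC setUCA (@sgnU i j s hj) (@sgnU j i s hi).
  case: ltngtP => h; try ring.
  by move: ij; rewrite (val_inj h) eqxx.
rewrite big_mkcond; apply: eq_bigr => j _; rewrite coef_dm /=.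
case: (boolP (j \in s)) => hj /=; first by rewrite big1 // => i _; rewrite /G hj.
rewrite mulr_sumr big_mkcond; apply: eq_bigr => i _; rewrite /G in_setU1 /=.
case: (eqVneq i j) => [->|ij] /=; first by rewrite !andbF.
rewrite hj andbT; case: (i \in s) => //=.
by rewrite (@decr_ne a j i ij) mulrA.
Qed.

Lemma coef_linext2 (M1 M2 : mono -> lc) f m' :
  coef (linext M2 (linext M1 f)) m' = \sum_(t <- f) t.1 * coef (linext M2 (M1 t.2)) m'.
Proof.
rewrite coef_linext (sum_linext M1 f (fun x => coef (M2 x) m')).
apply: eq_bigr => t _; by rewrite coef_linext.
Qed.

Lemma kk0 f : coef (kl (kl f)) =1 (fun _ => 0).
Proof.
move=> m'; rewrite /klc coef_linext2 big1 // => [[c [a s]]] _ /=.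
by rewrite -/(klc _) kk1 mulr0.
Qed.

Lemma dd0 f : coef (dl (dl f)) =1 (fun _ => 0).
Proof.
move=> m'; rewrite /dlc coef_linext2 big1 // => [[c [a s]]] _ /=.
by rewrite -/(dlc _) dd1 mulr0.
Qed.

Lemma hom f (z : int) : (forall t, t \in f -> (mdeg t.2 + fdeg t.2)%:Z = z) ->
  forall m', coef (kl (dl f)) m' + coef (dl (kl f)) m' = z%:~R * coef f m'.
Proof.
move=> h m'; rewrite /klc /dlc !coef_linext2 -big_split coefE mulr_sumr.
apply: eq_big_seq => -[c [a s]] tf /=.
rewrite -mulrDr -/(klc _) -/(dlc _) hom1 -(h _ tf) /= mulrCA; congr (_ * _).
Qed.


Lemma mem_linext (M : mono -> lc) f (t : R * mono) : t \in linext M f ->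
  exists u : R * mono, u \in f /\ exists v : R * mono, v \in M u.2 /\ t.2 = v.2.
Proof.
rewrite /linext => /flattenP [s /mapP [u uf ->] /mapP [v vM ->]].
by exists u; split=> //; exists v.
Qed.

Lemma mdeg_sum (m : mono) : mdeg m = (\sum_(i < n) m.1 i)%N.
Proof. by []. Qed.

Lemma dm_deg m (t : R * mono) : t \in dm m -> t.1 != 0 -> (mdeg t.2).+1 = mdeg m /\ fdeg t.2 = (fdeg m).+1.
Proof.
case: m => a s; rewrite /dmono => /mapP [j]; rewrite mem_filter => /andP [js _] -> /=.
rewrite mulf_eq0 negb_or => /andP [aj _].
have aj0 : (0 < a j)%N by rewrite lt0n; apply: contra aj => /eqP ->.
split.
  rewrite /mdeg /= (bigD1 j) //= [in RHS](bigD1 j) //= ffunE eqxx.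
  rewrite (eq_bigr (fun i => a i)); first by rewrite (_ : (a j - true = a j - 1)%N) // -addSn subn1 prednK.
  by move=> i ij; rewrite decr_ne.
by rewrite /fdeg /= cardsU1 js.
Qed.

Lemma km_deg m (t : R * mono) : t \in km m -> mdeg t.2 = (mdeg m).+1 /\ (fdeg t.2).+1 = fdeg m.
Proof.
case: m => a s; rewrite /kmono => /mapP [j]; rewrite mem_filter => /andP [js _] -> /=.
split.
  rewrite /mdeg /= (bigD1 j) //= [in RHS](bigD1 j) //= ffunE eqxx.
  rewrite (eq_bigr (fun i => a i)); first by rewrite (_ : (a j + true = a j + 1)%N) // addn1 addSn.
  by move=> i ij; rewrite incr_ne.
by rewrite /fdeg /= [in RHS](cardsD1 j s) js.
Qed.

Lemma span_filter (f : lc) (Q : pred mono) :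
  (forall t : R * mono, t \in f -> t.1 != 0 -> Q t.2) -> spanM Q (coef f).
Proof.
move=> h; exists (filter (fun t => t.1 != 0) f); split.
  by apply/allP => t; rewrite mem_filter => /andP [nz tf]; apply: h.
move=> m; rewrite !coefE big_filter big_mkcond /=.
apply: eq_bigr => t _; case: eqVneq => [->|] //=; by rewrite mul0r.
Qed.

Lemma coef_lin1 (M : mono -> lc) c m : coef (linext M [:: (c, m)]) =1 (fun x => c * coef (M m) x).
Proof. by move=> x; rewrite coef_linext big_seq1. Qed.

Lemma maps_linext_span (M : mono -> lc) (P Q : pred mono) :
  (forall m, P m -> forall t : R * mono, t \in M m -> t.1 != 0 -> Q t.2) ->
  maps (linext M) (spanM P) (spanM Q).
Proof.
move=> h; apply: maps_span; [exact: lin_linext|exact: good_span|].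
move=> m Pm; case: (@good_span R n Q) => Qe _ _ _ _.
apply: (Qe _ _ _ (span_filter (h m Pm))) => x; by rewrite coef_lin1 mul1r.
Qed.

Lemma span_mono (P Q : pred mono) : (forall m, P m -> Q m) -> sub (@spanM R n P) (@spanM R n Q).
Proof.
move=> h; apply: sub_span; first exact: good_span.
by move=> m Pm; exists [:: (1, m)]; split=> //=; rewrite h.
Qed.

Lemma span1 (P : pred mono) m : P m -> @spanM R n P (coef [:: ((1 : R), m)]).
Proof. by move=> Pm; exists [:: (1, m)]; split=> //=; rewrite Pm. Qed.

Lemma maps_sub_r L (V W W' : Defs.space R n) : maps L V W -> sub W W' -> maps L V W'.
Proof. by move=> h s f Vf; apply: s; apply: h. Qed.

Lemma good_Ps a b : good (@Ps R n a b). Proof. exact: good_span. Qed.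
Lemma good_Hrl a l b : good (@Hrl R n a l b). Proof. exact: good_span. Qed.
Lemma good_Js a b : good (@Js R n a b).
Proof. apply: good_bigsum => l; apply: good_img; [exact: lin_linext|exact: good_Hrl]. Qed.
Lemma good_Ss a b : good (@Ss R n a b).
Proof.
apply: good_addS; first by apply: good_addS; [exact: good_Ps|exact: good_Js].
apply: good_img; [exact: lin_linext|exact: good_Js].
Qed.
Lemma good_Sms a b : good (@Sms R n a b).
Proof.
apply: good_addS; first exact: good_Ss.
apply: good_img; [exact: lin_linext|exact: good_Ss].
Qed.

Lemma card_le_n (s : {set 'I_n}) : (#|s| <= n)%N.
Proof. by rewrite -[X in (_ <= X)%N](card_ord n) max_card. Qed.

Lemma Ps_Z a b : (b < 0 \/ n%:Z < b) -> sub (@Ps R n a b) Z.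
Proof.
move=> hb; apply: sub_span; first exact: good_Z.
move=> m /andP [_ /eqP hm]; exfalso; have := card_le_n m.2; rewrite /fdeg in hm.
case: hb => hb; lia.
Qed.

Lemma Js_Z a b : (b < 0 \/ n%:Z <= b) -> sub (@Js R n a b) Z.
Proof.
move=> hb; apply: sub_bigsum; first exact: good_Z.
move=> l _; apply: sub_img; first exact: good_Z.
apply: maps_span; [exact: lin_linext|exact: good_Z|].
move=> m /and3P [_ /eqP hm _] x; rewrite coef_lin1 mul1r coef_km.
have := card_le_n m.2; rewrite /fdeg in hm.
case: hb => hb; last by lia.
have : #|m.2| = 0%N by lia.
move/cards0_eq => ->; by rewrite big_pred0 // => i; rewrite in_set0.
Qed.

Lemma Ss_Z a b : (b < 0 \/ n%:Z < b) -> sub (@Ss R n a b) Z.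
Proof.
move=> hb; apply: sub_addS; first exact: good_Z.
  apply: sub_addS; first exact: good_Z.
    exact: Ps_Z.
  by apply: Js_Z; case: hb; [left|right]; lia.
apply: sub_img; first exact: good_Z.
apply: (maps_sub _ (maps_Z (lin_linext _) (good_Z R n))).
by apply: Js_Z; case: hb; [left|right]; lia.
Qed.


Local Notation Ps := (@Ps R n).
Local Notation Js := (@Js R n).
Local Notation Ss := (@Ss R n).
Local Notation Sms := (@Sms R n).
Local Notation Hrl := (@Hrl R n).

Lemma good_imgJ a b : good (img dl (Js a b)).
Proof. apply: good_img; [exact: lin_linext|exact: good_Js]. Qed.
Lemma good_imgS (L : mono -> lc) a b : good (img (linext L) (Ss a b)).
Proof. apply: good_img; [exact: lin_linext|exact: good_Ss]. Qed.
Lemma good_termJ a b l : good (img kl (Hrl (a + l%:Z - 1) l (b + 1))).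
Proof. apply: good_img; [exact: lin_linext|exact: good_Hrl]. Qed.

Lemma maps_kk (V W : Defs.space R n) : good W -> maps (fun f => kl (kl f)) V W.
Proof.
case=> We W0 _ _ _ f _; apply: (We _ _ _ W0) => x; by rewrite kk0.
Qed.

Lemma maps_dd (V W : Defs.space R n) : good W -> maps (fun f => dl (dl f)) V W.
Proof.
case=> We W0 _ _ _ f _; apply: (We _ _ _ W0) => x; by rewrite dd0.
Qed.

Lemma lin_kd : lin (fun f => kl (dl f)).
Proof. exact: lin_comp (lin_linext _) (lin_linext _). Qed.

Lemma J_shift a b : sub (Js (a - 1) b) (addS (Ps a b) (Js a b)).
Proof.
apply: sub_bigsum; first by apply: good_addS; [exact: good_Ps|exact: good_Js].
move=> l hl.
case: (eqVneq l 1%N) => [->|l1].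
  apply: sub_addl; first exact: good_Js.
  apply: sub_img; first exact: good_Ps.
  apply: maps_linext_span => m /and3P [/eqP hm /eqP hf _] t /km_deg [h1 h2] _.
  apply/andP; split; [|apply/eqP]; lia.
apply: sub_addr; first exact: good_Ps.
apply: (@sub_bigsum1 _ _ _ l.-1); [move=> j; exact: good_termJ|lia|].
apply: sub_img_mono; apply: span_mono => m /and3P [/eqP hm /eqP hf hl'].
apply/and3P; split; [apply/eqP; lia|apply/eqP; lia|lia].
Qed.

Lemma KD_J a b : maps (fun f => kl (dl f)) (Js a b) (Js a b).
Proof.
apply: maps_bigsum; [exact: lin_kd|move=> l; exact: good_termJ|exact: good_Js|].
move=> l hl; apply: maps_img; [exact: lin_kd|exact: good_Js|].
apply: maps_span; [exact: lin_comp lin_kd (lin_linext _)|exact: good_Js|].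
move=> m Pm; move: (Pm) => /and3P [/eqP hm /eqP hf _].
set F := kl [:: (1, m)].
have hF : forall t : R * mono, t \in F -> (mdeg t.2 + fdeg t.2)%:Z = (mdeg m + fdeg m)%:Z.
  move=> t /mem_linext [u [ut [v [vM ->]]]]; move: ut vM; rewrite mem_seq1 => /eqP -> /=.
  move/km_deg => [h1 h2]; lia.
have JF : Js a b (coef F).
  apply: (sub_bigsum1 (fun l => good_termJ a b l) hl (fun g h => h)).
  exists [:: (1, m)]; split=> //; exact: span1.
have e : coef (kl (dl F)) =1 (fun x => (mdeg m + fdeg m)%:R * coef F x).
  move=> x; have := hom hF x.
  have -> : coef (dl (kl F)) x = 0.
    rewrite (linext_wd _ (f2 := [::])) ?coef_linext ?big_nil // => y.
    by rewrite kk0 coef_nil.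
  by rewrite addr0.
case: (good_Js a b) => Je _ _ Jsc _; apply: (Je _ _ _ (Jsc _ _ JF)) => x; by rewrite e.
Qed.

Lemma coef_kl_sc c f x : coef (kl (sc c f)) x = c * coef (kl f) x.
Proof. by case: (lin_linext (@kmono R n)) => _ _ ls _; rewrite /klc ls. Qed.
Lemma coef_dl_sc c f x : coef (dl (sc c f)) x = c * coef (dl f) x.
Proof. by case: (lin_linext (@dmono R n)) => _ _ ls _; rewrite /dlc ls. Qed.

Lemma main3 (a b : int) : 1 <= a -> 0 <= b ->
  eqS (addS (Sms a b) (img dl (Ss (a + 1) (b - 1)))) (Ss a b).
Proof.
move=> ha hb.
have gR := good_Ss a b.
have gL : good (addS (Sms a b) (img dl (Ss (a + 1) (b - 1)))).
  by apply: good_addS; [exact: good_Sms|exact: good_imgS].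
have PJR : sub (addS (Ps a b) (Js a b)) (Ss a b).
  by apply: sub_addl; [exact: good_imgJ|move=> g h].
have JsR : sub (Js a b) (Ss a b).
  by apply: (sub_trans _ PJR); apply: sub_addr; [exact: good_Ps|move=> g h].
have PsR : sub (Ps a b) (Ss a b).
  by apply: (sub_trans _ PJR); apply: sub_addl; [exact: good_Js|move=> g h].
have dJR : sub (img dl (Js (a + 1) (b - 1))) (Ss a b).
  by apply: sub_addr; [apply: good_addS; [exact: good_Ps|exact: good_Js]|move=> g h].
have dPs : maps dl (Ps (a + 1) (b - 1)) (Ss a b).
  apply: (maps_sub_r _ PsR); apply: maps_linext_span => m /andP [hm /eqP hf] t /dm_deg h nz.
  case: (h nz) => h1 h2; apply/andP; split; [|apply/eqP]; lia.
have hLR : sub (addS (Sms a b) (img dl (Ss (a + 1) (b - 1)))) (Ss a b).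
  apply: (sub_addS gR).
    apply: (sub_addS gR).
      apply: (sub_addS gR).
        apply: (sub_addS gR).
          apply: (sub_trans _ PsR); apply: span_mono => m /andP [hm hf].
          by apply/andP; split; [lia|].
        exact: (sub_trans (@J_shift a b) PJR).
      apply: (sub_img gR); rewrite subrK.
      have := @J_shift (a + 1) (b - 1); rewrite addrK => hJ.
      apply: (maps_sub hJ); apply: maps_addS; [exact: lin_linext|exact: good_Ps|exact: good_Js|exact: gR| |].
        exact: dPs.
      by move=> f hf; apply: dJR; exists f.
    apply: (sub_img gR); apply: maps_addS; [exact: lin_linext|apply: good_addS; [exact: good_Ps|exact: good_Js]|exact: good_imgJ|exact: gR| |].
      apply: maps_addS; [exact: lin_linext|exact: good_Ps|exact: good_Js|exact: gR| |].
        apply: (maps_sub_r _ PsR); apply: maps_linext_span => m /andP [hm /eqP hf] t /km_deg [h1 h2] _.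
        apply/andP; split; [|apply/eqP]; lia.
      apply: maps_bigsum; [exact: lin_linext|move=> l; exact: good_termJ|exact: gR|].
      move=> l _; apply: maps_img; [exact: lin_linext|exact: gR|]; exact: maps_kk.
    rewrite subrK addrK; apply: maps_img; [exact: lin_linext|exact: gR|].
    exact: (maps_sub_r (@KD_J a b) JsR).
  apply: (sub_img gR); apply: maps_addS; [exact: lin_linext|apply: good_addS; [exact: good_Ps|exact: good_Js]|exact: good_imgJ|exact: gR| |].
    apply: maps_addS; [exact: lin_linext|exact: good_Ps|exact: good_Js|exact: gR| |].
      exact: dPs.
    by move=> f hf; apply: dJR; exists f.
  apply: maps_img; [exact: lin_linext|exact: gR|]; exact: maps_dd.
have hS1 : sub (Ss (a - 1) b) (addS (Sms a b) (img dl (Ss (a + 1) (b - 1)))).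
  apply: sub_addl; first exact: good_imgS.
  apply: sub_addl; first exact: good_imgS.
  by move=> g h.
have hS2 : sub (img kl (Ss (a - 1) (b + 1))) (addS (Sms a b) (img dl (Ss (a + 1) (b - 1)))).
  apply: sub_addl; first exact: good_imgS.
  apply: sub_addr; first exact: good_Ss.
  by move=> g h.
have hS3 : sub (img dl (Ss (a + 1) (b - 1))) (addS (Sms a b) (img dl (Ss (a + 1) (b - 1)))).
  apply: sub_addr; first exact: good_Sms.
  by move=> g h.
have PsS : forall a' b', sub (Ps a' b') (Ss a' b').
  move=> a' b'; apply: sub_addl; first exact: good_imgJ.
  apply: sub_addl; first exact: good_Js.
  by move=> g h.
have hRL : sub (Ss a b) (addS (Sms a b) (img dl (Ss (a + 1) (b - 1)))).
  apply: (sub_addS gL).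
    apply: (sub_addS gL).
      apply: (sub_span gL) => m /andP [hm hf].
      case: (boolP ((mdeg m)%:Z <= a - 1)) => hlt.
        apply: hS1; apply: PsS; apply: span1; by apply/andP.
      have hma : (mdeg m)%:Z = a by lia.
      set F : lc := [:: (1, m)].
      have hF : forall t : R * mono, t \in F -> (mdeg t.2 + fdeg t.2)%:Z = (mdeg m + fdeg m)%:Z.
        by move=> t; rewrite mem_seq1 => /eqP ->.
      have zn : ((mdeg m + fdeg m)%:R : R) != 0 by rewrite pnatr_eq0; lia.
      set c := ((mdeg m + fdeg m)%:R : R)^-1.
      have sF : spanM (fun x => x == m) (coef F) by apply: span1.
      have hP1 : Ps (a - 1) (b + 1) (coef (dl F)).
        apply: (maps_linext_span _ sF) => m0 /eqP -> t /dm_deg h nz.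
        case: (h nz) => h1 h2; rewrite /= in hf; apply/andP; split; [|apply/eqP]; lia.
      have hP2 : Ps (a + 1) (b - 1) (coef (kl F)).
        apply: (maps_linext_span _ sF) => m0 /eqP -> t /km_deg [h1 h2] _.
        apply/andP; split; [|apply/eqP]; lia.
      exists (fun x => c * coef (kl (dl F)) x), (fun x => c * coef (dl (kl F)) x); split.
        exists (fun _ => 0), (fun x => c * coef (kl (dl F)) x); split; first by case: (good_Ss (a - 1) b).
        split; last by move=> x; rewrite add0r.
        exists (sc c (dl F)); split; last by move=> x; rewrite coef_kl_sc.
        case: (good_Ss (a - 1) (b + 1)) => Se _ _ Ssc _.
        by apply: (Se _ _ _ (Ssc c _ (PsS _ _ _ hP1))) => x; rewrite coef_sc.
      split.
        exists (sc c (kl F)); split; last by move=> x; rewrite coef_dl_sc.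
        case: (good_Ss (a + 1) (b - 1)) => Se _ _ Ssc _.
        by apply: (Se _ _ _ (Ssc c _ (PsS _ _ _ hP2))) => x; rewrite coef_sc.
      by move=> x; rewrite -mulrDr (hom hF x) mulrA mulVf // mul1r.
    apply: sub_bigsum; first exact: gL.
    move=> l hl; apply: (sub_trans _ hS2).
    move=> g [f [[f' [Pf ef']] ef]].
    set F := kl f'.
    set z := a + l%:Z + b.
    have hF : forall t : R * mono, t \in F -> (mdeg t.2 + fdeg t.2)%:Z = z.
      move=> t /mem_linext [u [uf [v [vM ->]]]].
      have := allP Pf u uf => /and3P [/eqP hm /eqP hf _].
      case: (km_deg vM) => h1 h2; rewrite /z; lia.
    have zn : (z%:~R : R) != 0 by rewrite intr_eq0 /z; lia.
    set c := (z%:~R : R)^-1.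
    have kF : coef (dl (kl F)) =1 (fun _ => 0).
      move=> x; rewrite (linext_wd _ (f2 := [::])) ?coef_linext ?big_nil // => y.
      by rewrite kk0 coef_nil.
    have hD : Ss (a - 1) (b + 1) (coef (dl F)).
      exists (fun _ => 0), (coef (dl F)); split.
        by case: (good_addS (good_Ps (a - 1) (b + 1)) (good_Js (a - 1) (b + 1))).
      split; last by move=> x; rewrite add0r.
      exists F; split=> //; rewrite subrK addrK.
      apply: (sub_bigsum1 (fun l => good_termJ a b l) hl (fun g h => h)).
      by exists f'; split=> //; exists f'.
    exists (sc c (dl F)); split.
      case: (good_Ss (a - 1) (b + 1)) => Se _ _ Ssc _.
      by apply: (Se _ _ _ (Ssc c _ hD)) => x; rewrite coef_sc.
    move=> x; rewrite coef_kl_sc.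
    have := hom hF x; rewrite kF addr0 => ->.
    rewrite mulrA mulVf // mul1r -ef; apply: linext_wd => y; by rewrite ef'.
  apply: (sub_trans _ hS3); apply: sub_img_mono.
  apply: sub_addl; first exact: good_imgJ.
  apply: sub_addr; first exact: good_Ps.
  by move=> g h.
by move=> g; split; [apply: hLR|apply: hRL].
Qed.

End Comp.

Unset Implicit Arguments.

Theorem mainTheorem4 (R : realFieldType) (n r : nat) (hn : (1 <= n)%N) (hr : (1 <= r)%N) :
  eqS (@Sms R n r%:Z 0) (@Ss R n r%:Z 0) /\
  eqS (@Sms R n r%:Z n%:Z) (@Ss R n (r%:Z - 1) n%:Z) /\
  (forall k : nat, (k <= n)%N ->
     eqS (addS (@Sms R n r%:Z k%:Z) (img (@dlc R n) (@Ss R n (r%:Z + 1) (k%:Z - 1))))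
         (@Ss R n r%:Z k%:Z)).
Proof.
have h3 : forall k : nat, (k <= n)%N ->
     eqS (addS (@Sms R n r%:Z k%:Z) (img (@dlc R n) (@Ss R n (r%:Z + 1) (k%:Z - 1))))
         (@Ss R n r%:Z k%:Z).
  by move=> k hk; apply: main3; lia.
split; last split; last exact: h3.
- have e := h3 0%N (leq0n n).
  have hZ : sub (img (@dlc R n) (@Ss R n (r%:Z + 1) (0%N%:Z - 1))) (@Z R n).
    apply: sub_img; first exact: good_Z.
    have hb : (0%N%:Z - 1 < 0 \/ n%:Z < 0%N%:Z - 1)%R by left; lia.
    exact: (maps_sub (@Ss_Z R n (r%:Z + 1) _ hb) (maps_Z (lin_linext _) (good_Z R n))).
  have e2 := addS_Z (good_Sms R n r%:Z 0%N%:Z) (@good_imgS R n (@dmono R n) (r%:Z + 1) (0%N%:Z - 1)) hZ.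
  move=> g; split => h.
    by apply/e; apply/e2.
  by apply/e2; apply/e.
- have hZ : sub (img (@klc R n) (@Ss R n (r%:Z - 1) (n%:Z + 1))) (@Z R n).
    apply: sub_img; first exact: good_Z.
    have hb : (n%:Z + 1 < 0 \/ n%:Z < n%:Z + 1)%R by right; lia.
    exact: (maps_sub (@Ss_Z R n (r%:Z - 1) _ hb) (maps_Z (lin_linext _) (good_Z R n))).
  exact: (addS_Z (good_Ss R n (r%:Z - 1) n%:Z) (@good_imgS R n (@kmono R n) (r%:Z - 1) (n%:Z + 1)) hZ).
Qed.
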